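(* The space $X_{\mathrm{crs}}$ is not regular: the origin $x$ and the closed set $A=\bigcup_{n\ge1} e_n^0$ (which does not contain $x$) cannot be separated by disjoint open sets; indeed every open neighborhood of $x$ meets every open neighborhood of $A$.
   Context: Let $X$ be the following 2-dimensional CW-complex. Its 0-cells are $e_n^0$, $n\ge 0$; the point $x=e_0^0$ is called the origin. For each $n\ge1$ there are two 1-cells $e_n^1, e_{-n}^1$, each joining $x$ to $e_n^0$, so that $e_0^0\cup e_n^0\cup e_n^1\cup e_{-n}^1$ is homeomorphic to a circle; for each $n\ge1$ a 2-cell $e_n^2$ is attached via a homeomorphism $\varphi_n:S^1\to e_0^0\cup e_n^0\cup e_n^1\cup e_{-n}^1$. Thus each closed 2-cell $\overline{e_n^2}$ is a closed disk having $x$ and $e_n^0$ on its boundary, and $X$ is a wedge at $x$ of countably many closed disks, carrying the CW (weak) topology. The coarser topology on the set $X$ consists of all subsets $U\subset X$ that are open in the CW-topology and either do not contain $x$, or contain $\overline{e_n^2}\smallsetminus e_n^0$ for all but finitely many $n\ge1$. The set $X$ with this coarser topology is denoted $X_{\mathrm{crs}}$. *)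

(* Defs.v *)
From Stdlib Require Import Reals.
Open Scope R_scope.

(* The closed unit disk D in R^2; every closed 2-cell of X is a copy of D.
   In the n-th copy, the boundary point (-1,0) is the origin x = e_0^0,
   (1,0) is the 0-cell e_n^0, and the open upper / lower semicircles are
   the 1-cells e_n^1, e_{-n}^1. *)
Definition inD (p : R * R) : Prop := fst p ^ 2 + snd p ^ 2 <= 1.
Definition base : R * R := (-1, 0).
Definition tip  : R * R := (1, 0).

(* Points of X: None = origin x; Some (n, p) = point p of the n-th disk (n >= 1),
   p different from base. *)
Definition validX (q : option (nat * (R * R))) : Prop :=
  match q with
  | None => True
  | Some (n, p) => (1 <= n)%nat /\ inD p /\ p <> base
  end.
Definition X : Type := { q : option (nat * (R * R)) | validX q }.

Definition origin : X := exist validX None I.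

Definition pair_dec (p q : R * R) : {p = q} + {p <> q}.
Proof.
  destruct p as [a b], q as [c d].
  destruct (Req_EM_T a c) as [H1|H1]; [destruct (Req_EM_T b d) as [H2|H2]|].
  - left; subst; reflexivity.
  - right; intro H; inversion H; contradiction.
  - right; intro H; inversion H; contradiction.
Defined.

Definition charmap (n : nat) (Hn : (1 <= n)%nat) (p : R * R) (Hp : inD p) : X :=
  match pair_dec p base with
  | left _ => origin
  | right H => exist validX (Some (n, p)) (conj Hn (conj Hp H))
  end.

Definition sqdist (p q : R * R) : R := (fst q - fst p) ^ 2 + (snd q - snd p) ^ 2.

(* Since every closed cell lies in some closed 2-cell, this is the weak topology. *)
Definition open_cw (U : X -> Prop) : Prop :=
  forall (n : nat) (Hn : (1 <= n)%nat) (p : R * R) (Hp : inD p),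
    U (charmap n Hn p Hp) ->
    exists eps : R, 0 < eps /\
      forall (q : R * R) (Hq : inD q), sqdist p q < eps ^ 2 -> U (charmap n Hn q Hq).

Definition open_crs (U : X -> Prop) : Prop :=
  open_cw U /\
  (~ U origin \/
   exists N : nat, forall (n : nat) (Hn : (1 <= n)%nat), (N <= n)%nat ->
     forall (p : R * R) (Hp : inD p), p <> tip -> U (charmap n Hn p Hp)).

Definition closed_crs (C : X -> Prop) : Prop := open_crs (fun y => ~ C y).

Definition A_set (y : X) : Prop := exists n : nat, proj1_sig y = Some (n, tip).

Definition regular_space (T : Type) (opn : (T -> Prop) -> Prop) : Prop :=
  forall (C : T -> Prop) (x : T), opn (fun y => ~ C y) -> ~ C x ->
    exists U V : T -> Prop, opn U /\ opn V /\ U x /\ (forall y, C y -> V y) /\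
      (forall y, ~ (U y /\ V y)).

(* Main.v *)
Require Import Defs.
From Stdlib Require Import Reals Lra Psatz.
Open Scope R_scope.

Lemma A_charmap n Hn p Hp : A_set (charmap n Hn p Hp) -> p = tip.
Proof.
  unfold charmap, A_set. destruct (pair_dec p base) as [e|ne]; simpl.
  - intros [m H]; discriminate.
  - intros [m H]; inversion H; reflexivity.
Qed.

Lemma part1 : closed_crs A_set.
Proof.
  split.
  - intros n Hn p Hp HA.
    assert (Hpt : p <> tip) by (intro E; subst; apply HA;
      unfold charmap; destruct (pair_dec tip base) as [e|ne];
      [unfold tip, base in e; inversion e; lra | exists n; reflexivity]).
    set (d := sqdist p tip).
    assert (dpos : 0 < d).
    { unfold d, sqdist. destruct p as [a b]. unfold tip in *; simpl.
      destruct (Req_EM_T a 1) as [->|h1]; destruct (Req_EM_T b 0) as [->|h2].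
      - exfalso; apply Hpt; reflexivity.
      - assert (0 < (0-b)^2) by (apply pow_lt_R0 || nra); nra.
      - assert (0 < (1-a)^2) by nra; nra.
      - assert (0 < (1-a)^2) by nra; nra. }
    exists (Rmin 1 d). split.
    + apply Rmin_glb_lt; lra.
    + intros q Hq Hs HA'. apply A_charmap in HA'. subst q.
      assert (Rmin 1 d ^ 2 <= d).
      { pose proof (Rmin_l 1 d); pose proof (Rmin_r 1 d).
        assert (0 < Rmin 1 d) by (apply Rmin_glb_lt; lra). nra. }
      fold d in Hs. lra.
  - right. exists 0%nat. intros n Hn _ p Hp Hpt HA. apply A_charmap in HA. contradiction.
Qed.

Lemma part3 : forall U V : X -> Prop, open_crs U -> open_crs V -> U origin ->
     (forall y, A_set y -> V y) -> exists y, U y /\ V y.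
Proof.
  intros U V [HUo [HU|[N HN]]] [HVo _] Uo HAV; [contradiction|].
  set (n := Nat.max N 1).
  assert (Hn : (1 <= n)%nat) by apply Nat.le_max_r.
  assert (HN' : (N <= n)%nat) by apply Nat.le_max_l.
  assert (Ht : inD tip) by (unfold inD, tip; simpl; lra).
  assert (Vt : V (charmap n Hn tip Ht)).
  { apply HAV. unfold charmap. destruct (pair_dec tip base) as [e|ne].
    - unfold tip, base in e; inversion e; lra.
    - exists n; reflexivity. }
  destruct (HVo n Hn tip Ht Vt) as [eps [Heps H]].
  set (t := Rmin 1 eps / 2).
  assert (t0 : 0 < t) by (unfold t; assert (0 < Rmin 1 eps) by (apply Rmin_glb_lt; lra); lra).
  assert (t1 : t < 1) by (unfold t; pose proof (Rmin_l 1 eps); lra).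
  assert (t2 : t < eps) by (unfold t; pose proof (Rmin_r 1 eps); lra).
  assert (Hq : inD (1 - t, 0)) by (unfold inD; simpl; nra).
  exists (charmap n Hn (1 - t, 0) Hq). split.
  - apply HN; auto. intro E; inversion E; lra.
  - apply H. unfold sqdist, tip; simpl. nra.
Qed.

Theorem mainTheorem3 :
  closed_crs A_set /\ ~ A_set origin /\
  (forall U V : X -> Prop, open_crs U -> open_crs V -> U origin ->
     (forall y, A_set y -> V y) -> exists y, U y /\ V y) /\
  ~ regular_space X open_crs.
Proof.
  assert (H2 : ~ A_set origin) by (intros [m Hm]; discriminate).
  split; [exact part1|]. split; [exact H2|]. split; [exact part3|].
  intro R. destruct (R A_set origin part1 H2) as [U [V [HU [HV [Uo [HAV Hd]]]]]].
  destruct (part3 U V HU HV Uo HAV) as [y Hy]. exact (Hd y Hy).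
Qed.
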